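(* For a positive integer $m$ let $M=\lfloor\frac{m-1}{2}\rfloor$ and define $$\widetilde{f_{m,1}}(z)=(-1)^M\int_0^z\frac{y^{2M+2}}{1+y^2}\,dy\qquad\big(z\in\mathbb{C}\setminus([i,i\infty)\cup[-i,-i\infty))\big),$$ the integral taken along the line segment from $0$ to $z$. As $m\to\infty$ the following estimates hold, uniformly in $z$ and $t$: (i) $\widetilde{f_{m,1}}(z)=O(2^{-m})$ for $|z|\le\frac12$; (ii) $\widetilde{f_{m,1}}(it)=O\big(e^{-\frac12\sqrt m}\frac{1}{\sqrt m}\big)$ for $-1+\frac1{\sqrt m}\le t\le1-\frac1{\sqrt m}$; (iii) for $1-\frac1{\sqrt m}\le t\le 1-\frac1m$, $$\widetilde{f_{m,1}}(it)=\frac{1}{2i}\int_{m(1-t)}^\infty\frac{e^{-\zeta}}{\zeta}\,d\zeta+O\!\left(\frac{\ln m}{m}\right)=O(1),$$ and also $\widetilde{f_{m,1}}(-it)=O(1)$. *)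

(* Defs.v *)
From Stdlib Require Import Reals.
From Coquelicot Require Import Coquelicot.
Open Scope R_scope.

Definition bigM (m : nat) : nat := Nat.div (m - 1) 2.

Fixpoint cpow (z : Complex.C) (n : nat) : Complex.C :=
  match n with
  | O => RtoC 1
  | S k => Cmult z (cpow z k)
  end.

Definition integrand (m : nat) (y : Complex.C) : Complex.C :=
  Cdiv (cpow y (2 * bigM m + 2)) (Cplus (RtoC 1) (Cmult y y)).

(* f~_{m,1}(z) = (-1)^M * int_0^z y^(2M+2)/(1+y^2) dy along the segment [0,z],
   parametrized y = s z, s in [0,1], dy = z ds. *)
Definition ftilde (m : nat) (z : Complex.C) : Complex.C :=
  Cmult (RtoC ((-1) ^ bigM m))
    (@RInt C_R_CompleteNormedModule
       (fun s : R => Cmult z (integrand m (Cmult (RtoC s) z))) 0 1).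

Definition expint (a : R) : R :=
  RInt_gen (fun x : R => exp (- x) / x) (at_point a) (Rbar_locally p_infty).

Definition iR (t : R) : Complex.C := (0, t)%R.

(* Main.v *)
Require Import Defs.
From Stdlib Require Import Reals Lia Lra Classical.
From Coquelicot Require Import Coquelicot.
Open Scope R_scope.

Definition nn (m : nat) : nat := (2 * bigM m + 2)%nat.

Lemma nn_bounds m : (1 <= m)%nat -> (m <= nn m <= m + 1)%nat.
Proof.
  intros H. unfold nn, bigM.
  pose proof (Nat.div_mod (m-1) 2 ltac:(lia)).
  pose proof (Nat.mod_upper_bound (m-1) 2 ltac:(lia)).
  lia.
Qed.

Lemma pow_le_dec (x : R) (a b : nat) : 0 <= x <= 1 -> (a <= b)%nat -> x ^ b <= x ^ a.
Proof.
  intros Hx Hab. induction Hab. lra.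
  simpl. assert (0 <= x ^ m) by (apply pow_le; lra).
  nra.
Qed.

Lemma exp_pow_n (x : R) (n : nat) : exp x ^ n = exp (INR n * x).
Proof.
  induction n. simpl. rewrite Rmult_0_l, exp_0. reflexivity.
  simpl pow. rewrite IHn, S_INR, <- exp_plus. f_equal. ring.
Qed.

Lemma normC (z : Complex.C) : @norm R_AbsRing C_R_NormedModule z = Cmod z.
Proof.
  destruct z as [x y]. unfold Cmod. simpl.
  change (sqrt (Rabs x ^ 2 + Rabs y ^ 2) = sqrt (x ^ 2 + y ^ 2)).
  rewrite !pow2_abs. reflexivity.
Qed.

Lemma cont_C (f : R -> Complex.C) x :
  continuity_pt (fun y => fst (f y)) x -> continuity_pt (fun y => snd (f y)) x ->
  @continuous R_UniformSpace C_UniformSpace f x.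
Proof.
  intros H1 H2. apply continuity_pt_filterlim in H1. apply continuity_pt_filterlim in H2.
  intros P [eps HP].
  assert (A1 := H1 (ball (fst (f x)) eps) (locally_ball _ _)).
  assert (A2 := H2 (ball (snd (f x)) eps) (locally_ball _ _)).
  simpl in A1, A2. unfold filtermap in *.
  generalize (filter_and _ _ A1 A2). apply filter_imp.
  intros y [B1 B2]. apply HP. split; assumption.
Qed.

Lemma cont_fst (f : R -> Complex.C) x : @continuous R_UniformSpace C_UniformSpace f x ->
  continuity_pt (fun y => fst (f y)) x.
Proof.
  intros H. apply continuity_pt_filterlim.
  intros P [eps HP]. unfold filtermap.
  assert (A := H (ball (f x) eps) (locally_ball _ _)). simpl in A. unfold filtermap in A.
  revert A. apply filter_imp. intros y [B1 B2]. apply HP. exact B1.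
Qed.

Lemma cont_snd (f : R -> Complex.C) x : @continuous R_UniformSpace C_UniformSpace f x ->
  continuity_pt (fun y => snd (f y)) x.
Proof.
  intros H. apply continuity_pt_filterlim.
  intros P [eps HP]. unfold filtermap.
  assert (A := H (ball (f x) eps) (locally_ball _ _)). simpl in A. unfold filtermap in A.
  revert A. apply filter_imp. intros y [B1 B2]. apply HP. exact B2.
Qed.

Lemma cont_Cmult (f g : R -> Complex.C) x :
  @continuous R_UniformSpace C_UniformSpace f x -> @continuous R_UniformSpace C_UniformSpace g x ->
  @continuous R_UniformSpace C_UniformSpace (fun y => Cmult (f y) (g y)) x.
Proof.
  intros Hf Hg. apply cont_fst in Hf as F1. apply cont_snd in Hf as F2.
  apply cont_fst in Hg as G1. apply cont_snd in Hg as G2.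
  apply cont_C; simpl.
  - apply continuity_pt_minus; apply continuity_pt_mult; assumption.
  - apply continuity_pt_plus; apply continuity_pt_mult; assumption.
Qed.

Lemma cont_Cplus (f g : R -> Complex.C) x :
  @continuous R_UniformSpace C_UniformSpace f x -> @continuous R_UniformSpace C_UniformSpace g x ->
  @continuous R_UniformSpace C_UniformSpace (fun y => Cplus (f y) (g y)) x.
Proof.
  intros Hf Hg. apply cont_fst in Hf as F1. apply cont_snd in Hf as F2.
  apply cont_fst in Hg as G1. apply cont_snd in Hg as G2.
  apply cont_C; simpl; apply continuity_pt_plus; assumption.
Qed.

Lemma cont_Cinv (f : R -> Complex.C) x :
  @continuous R_UniformSpace C_UniformSpace f x -> f x <> RtoC 0 ->
  @continuous R_UniformSpace C_UniformSpace (fun y => Cinv (f y)) x.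
Proof.
  intros Hf Hne. apply cont_fst in Hf as F1. apply cont_snd in Hf as F2.
  assert (Hd : fst (f x) ^ 2 + snd (f x) ^ 2 <> 0).
  { intro E. apply Hne. destruct (f x) as [a b]. simpl in E.
    assert (a = 0) by nra. assert (b = 0) by nra. subst. reflexivity. }
  assert (D : continuity_pt (fun y => fst (f y) ^ 2 + snd (f y) ^ 2) x).
  { apply continuity_pt_plus; simpl; repeat apply continuity_pt_mult; try assumption;
    apply continuity_pt_const; intros a b; reflexivity. }
  apply cont_C; simpl.
  - apply continuity_pt_div; assumption.
  - apply continuity_pt_div; try assumption. apply continuity_pt_opp. assumption.
Qed.

Lemma cont_const (c : Complex.C) x : @continuous R_UniformSpace C_UniformSpace (fun _ => c) x.
Proof. apply cont_C; apply continuity_pt_const; intros a b; reflexivity. Qed.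

Lemma cont_RtoC x : @continuous R_UniformSpace C_UniformSpace (fun y => RtoC y) x.
Proof. apply cont_C; simpl. apply continuity_pt_id. apply continuity_pt_const; intros a b; reflexivity. Qed.

Lemma cont_cpow (f : R -> Complex.C) x n :
  @continuous R_UniformSpace C_UniformSpace f x ->
  @continuous R_UniformSpace C_UniformSpace (fun y => cpow (f y) n) x.
Proof.
  intros Hf. induction n; simpl. apply cont_const. apply cont_Cmult; assumption.
Qed.

Lemma Cmod_cpow w n : Cmod (cpow w n) = Cmod w ^ n.
Proof. induction n; simpl. apply Cmod_1. rewrite Cmod_mult, IHn. reflexivity. Qed.

Lemma Cmod_1pww (w : Complex.C) : 1 - Cmod w ^ 2 <= Cmod (Cplus (RtoC 1) (Cmult w w)).
Proof.
  assert (E : RtoC 1 = Cplus (Cplus (RtoC 1) (Cmult w w)) (Copp (Cmult w w))).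
  { destruct w; unfold Cplus, Copp, Cmult, RtoC; simpl; f_equal; ring. }
  pose proof (Cmod_triangle (Cplus (RtoC 1) (Cmult w w)) (Copp (Cmult w w))) as T.
  rewrite <- E, Cmod_1, Cmod_opp, Cmod_mult in T. simpl. lra.
Qed.

Definition phi (m : nat) (z : Complex.C) (s : R) : Complex.C :=
  Cmult z (integrand m (Cmult (RtoC s) z)).

Lemma Cmod_sz s z : Cmod (Cmult (RtoC s) z) = Rabs s * Cmod z.
Proof. rewrite Cmod_mult, Cmod_R. reflexivity. Qed.

Lemma phi_cont m z s : Cmod z < 1 -> 0 <= s <= 1 ->
  @continuous R_UniformSpace C_UniformSpace (phi m z) s.
Proof.
  intros Hz Hs. unfold phi, integrand, Cdiv.
  apply cont_Cmult. apply cont_const.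
  assert (Hw : @continuous R_UniformSpace C_UniformSpace (fun y => Cmult (RtoC y) z) s).
  { apply cont_Cmult. apply cont_RtoC. apply cont_const. }
  apply cont_Cmult. apply cont_cpow; assumption.
  apply cont_Cinv. apply cont_Cplus. apply cont_const. apply cont_Cmult; assumption.
  intro E. pose proof (Cmod_1pww (Cmult (RtoC s) z)) as T.
  rewrite E, Cmod_0, Cmod_sz in T.
  assert (0 <= Cmod z) by apply Cmod_ge_0.
  assert (Rabs s * Cmod z < 1). { rewrite Rabs_pos_eq by lra. nra. }
  assert (0 <= Rabs s * Cmod z) by (apply Rmult_le_pos; [apply Rabs_pos|lra]).
  nra.
Qed.

Lemma phi_ex m z : Cmod z < 1 -> @ex_RInt C_R_NormedModule (phi m z) 0 1.
Proof.
  intros Hz. apply (@ex_RInt_continuous C_R_CompleteNormedModule).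
  rewrite Rmin_left, Rmax_right by lra. intros s Hs. apply phi_cont; assumption.
Qed.

Lemma ftilde_bound m z : Cmod z < 1 ->
  Cmod (ftilde m z) <= Cmod z ^ (nn m + 1) / (1 - Cmod z ^ 2).
Proof.
  intros Hz. set (r := Cmod z).
  assert (Hr0 : 0 <= r) by apply Cmod_ge_0.
  assert (Hd : 0 < 1 - r ^ 2) by (fold r in Hz; simpl; nra).
  pose proof (@RInt_correct C_R_CompleteNormedModule _ _ _ (phi_ex m z Hz)) as HI.
  pose proof (@norm_RInt_le_const C_R_NormedModule (phi m z) 0 1 (@RInt C_R_CompleteNormedModule (phi m z) 0 1) (r ^ (nn m + 1) / (1 - r ^ 2))
     ltac:(lra)) as NB.
  unfold ftilde. rewrite Cmod_mult, Cmod_R, pow_1_abs, Rmult_1_l.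
  rewrite <- normC. fold (phi m z).
  replace (r ^ (nn m + 1) / (1 - r ^ 2)) with ((1 - 0) * (r ^ (nn m + 1) / (1 - r ^ 2))) by ring.
  apply NB; [|exact HI].
  intros s Hs. rewrite normC. unfold phi, integrand, Cdiv.
  rewrite Cmod_mult, Cmod_mult, Cmod_cpow, Cmod_sz, Cmod_inv.
  2:{ intro E. pose proof (Cmod_1pww (Cmult (RtoC s) z)) as T.
      rewrite E, Cmod_0, Cmod_sz in T. rewrite Rabs_pos_eq in T by lra.
      fold r in T. assert (s * r <= r) by nra. assert (0 <= s * r) by nra. nra. }
  pose proof (Cmod_1pww (Cmult (RtoC s) z)) as T. rewrite Cmod_sz in T.
  rewrite Rabs_pos_eq in * by lra. fold r in T |- *.
  assert (Hsr : 0 <= s * r <= r) by (split; nra).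
  assert (P1 : (s * r) ^ nn m <= r ^ nn m) by (apply pow_incr; lra).
  assert (P2 : 1 - r ^ 2 <= Cmod (Cplus (RtoC 1) (Cmult (Cmult (RtoC s) z) (Cmult (RtoC s) z)))).
  { assert ((s*r)^2 <= r^2) by (apply pow_incr; lra). lra. }
  assert (P3 : 0 <= (s * r) ^ nn m) by (apply pow_le; lra).
  change (2 * bigM m + 2)%nat with (nn m). rewrite (pow_add r). unfold Rdiv.
  assert (Hq : 0 < / Cmod (Cplus (RtoC 1) (Cmult (Cmult (RtoC s) z) (Cmult (RtoC s) z)))
               <= / (1 - r ^ 2)).
  { split. apply Rinv_0_lt_compat; lra. apply Rinv_le_contravar; lra. }
  replace (r ^ nn m * r ^ 1 * / (1 - r ^ 2)) with (r * (r ^ nn m * / (1 - r ^ 2))) by ring.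
  apply Rmult_le_compat_l; [lra|].
  apply Rmult_le_compat; lra.
Qed.

Lemma Cmod_iR t : Cmod (iR t) = Rabs t.
Proof.
  unfold Cmod, iR; simpl. replace (0 * (0 * 1) + t * (t * 1)) with (Rsqr t) by (unfold Rsqr; ring).
  apply sqrt_Rsqr_abs.
Qed.

Lemma part1 : exists K : R, exists N : nat, forall m : nat, (N <= m)%nat ->
     forall z : Complex.C, Cmod z <= / 2 ->
       Cmod (ftilde m z) <= K * (/ 2) ^ m.
Proof.
  exists 2, 1%nat. intros m Hm z Hz.
  assert (H0 : 0 <= Cmod z) by apply Cmod_ge_0.
  eapply Rle_trans. apply ftilde_bound; lra.
  pose proof (nn_bounds m Hm) as Hn.
  assert (A : Cmod z ^ (nn m + 1) <= (/2) ^ m).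
  { eapply Rle_trans. apply pow_incr. split; [exact H0| exact Hz].
    apply pow_le_dec. lra. lia. }
  assert (B : 3/4 <= 1 - Cmod z ^ 2) by (simpl; nra).
  assert (C0 : 0 <= Cmod z ^ (nn m + 1)) by (apply pow_le; lra).
  unfold Rdiv. apply Rle_trans with ((/2)^m * / (3/4)).
  apply Rmult_le_compat; try lra. left; apply Rinv_0_lt_compat; lra.
  apply Rinv_le_contravar; lra.
  assert (0 <= (/2)^m) by (apply pow_le; lra). lra.
Qed.

Lemma part2 : exists K : R, exists N : nat, forall m : nat, (N <= m)%nat ->
     forall t : R, -1 + / sqrt (INR m) <= t <= 1 - / sqrt (INR m) ->
       Cmod (ftilde m (iR t)) <= K * (exp (- (/ 2) * sqrt (INR m)) / sqrt (INR m)).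
Proof.
  exists 16, 4%nat. intros m Hm t Ht.
  assert (Hm4 : 4 <= INR m) by (replace 4 with (INR 4) by (simpl; ring); apply le_INR; lia).
  set (x := sqrt (INR m)) in *.
  assert (Hx2 : x * x = INR m) by (apply sqrt_sqrt; lra).
  assert (Hx : 2 <= x).
  { unfold x. replace 2 with (sqrt 4). apply sqrt_le_1_alt; lra.
    replace 4 with (Rsqr 2) by (unfold Rsqr; ring). apply sqrt_Rsqr; lra. }
  set (d := / x) in *.
  assert (Hd : 0 < d <= /2). { unfold d. split. apply Rinv_0_lt_compat; lra. apply Rinv_le_contravar; lra. }
  assert (Hdx : d * x = 1) by (unfold d; field; lra).
  assert (Hr : 0 <= Cmod (iR t) <= 1 - d).
  { rewrite Cmod_iR. split. apply Rabs_pos. apply Rabs_le. lra. }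
  eapply Rle_trans. apply ftilde_bound; lra.
  rewrite Cmod_iR in *. set (r := Rabs t) in *.
  pose proof (nn_bounds m ltac:(lia)) as Hn.
  assert (A : r ^ (nn m + 1) <= (1 - d) ^ m).
  { eapply Rle_trans. apply pow_incr. exact Hr. apply pow_le_dec. lra. lia. }
  assert (A2 : (1 - d) ^ m <= exp (- x)).
  { apply Rle_trans with (exp (-d) ^ m). apply pow_incr. split. lra. left.
    pose proof (exp_ineq1 (-d) ltac:(lra)). lra.
    rewrite exp_pow_n. right. f_equal. rewrite <- Hx2. unfold d. field. lra. }
  assert (B : d <= 1 - r ^ 2) by (simpl; nra).
  assert (C0 : 0 <= r ^ (nn m + 1)) by (apply pow_le; lra).
  apply Rle_trans with (exp (- x) * x).
  { unfold Rdiv. apply Rmult_le_compat; try lra. left; apply Rinv_0_lt_compat; lra.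
    replace x with (/ d) by (unfold d; field; lra). apply Rinv_le_contravar; lra. }
  (* x e^{-x} <= 16 e^{-x/2} / x *)
  assert (E1 : x / 4 <= exp (x / 4)) by (pose proof (exp_ineq1 (x/4) ltac:(lra)); lra).
  assert (E2 : exp (- x) = exp (- (/2) * x) * (/ exp (x/4) * / exp (x/4))).
  { rewrite <- !exp_Ropp, <- !exp_plus. f_equal. field. }
  rewrite E2.
  assert (P : 0 < exp (- (/ 2) * x)) by apply exp_pos.
  assert (Q : / exp (x/4) <= 4 / x).
  { replace (4 / x) with (/ (x/4)) by (field; lra). apply Rinv_le_contravar; lra. }
  assert (Q0 : 0 < / exp (x/4)) by (apply Rinv_0_lt_compat, exp_pos).
  unfold Rdiv.
  assert (/ exp (x / 4) * / exp (x / 4) * x <= 16 * / x).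
  { apply Rle_trans with (4 / x * (4 / x) * x). apply Rmult_le_compat_r; try lra.
    apply Rmult_le_compat; lra. right. field. lra. }
  nra.
Qed.

Definition G (m : nat) (w : R) : R := w ^ nn m / (1 - w ^ 2).
Definition g (m : nat) (t s : R) : R := t * G m (s * t).

Lemma cpow_imag_even y k : cpow (0, y) (2 * k) = ((-1) ^ k * y ^ (2 * k), 0).
Proof.
  induction k. simpl. unfold RtoC. f_equal; ring.
  replace (2 * S k)%nat with (S (S (2 * k))) by lia.
  change (cpow (0, y) (S (S (2 * k)))) with (Cmult (0,y) (Cmult (0,y) (cpow (0, y) (2 * k)))).
  rewrite IHk. unfold Cmult; simpl. f_equal; ring.
Qed.

Lemma G_cont m w : -1 < w < 1 -> continuity_pt (G m) w.
Proof.
  intros Hw. apply continuity_pt_filterlim. apply (ex_derive_continuous (G m)).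
  unfold G. auto_derive. intro E. assert (w * w < 1) by nra. simpl in E. lra.
Qed.

Lemma g_ex m t a b : -1 < t < 1 -> 0 <= a <= 1 -> 0 <= b <= 1 -> ex_RInt (g m t) a b.
Proof.
  intros Ht Ha Hb. apply (@ex_RInt_continuous R_CompleteNormedModule).
  intros s Hs. assert (Hs' : 0 <= s <= 1).
  { split. eapply Rle_trans; [|apply Hs]. apply Rmin_glb; lra.
    eapply Rle_trans; [apply Hs|]. apply Rmax_lub; lra. }
  apply continuity_pt_filterlim. unfold g.
  apply continuity_pt_mult. apply continuity_pt_const; intros u v; reflexivity.
  apply (continuity_pt_comp (fun s => s * t) (G m)).
  apply continuity_pt_mult. apply continuity_pt_id. apply continuity_pt_const; intros u v; reflexivity.
  apply G_cont. split; nra.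
Qed.

Lemma phi_imag m t s : 0 <= s <= 1 -> -1 < t < 1 ->
  phi m (iR t) s = (0, (-1) ^ (bigM m + 1) * g m t s).
Proof.
  intros Hs Ht.
  unfold phi, integrand, g, G, Cdiv, nn.
  replace (Cmult (RtoC s) (iR t)) with ((0, s * t) : Complex.C)
    by (unfold Cmult, RtoC, iR; simpl; f_equal; ring).
  replace (2 * bigM m + 2)%nat with (2 * (bigM m + 1))%nat by lia.
  rewrite cpow_imag_even.
  assert (Hd : 1 - (s * t) ^ 2 <> 0).
  { assert (t*t<1) by nra. assert (0 <= s*s <= 1) by nra. assert (0 <= t * t) by nra.
    assert ((s*s)*(t*t) <= t*t) by nra. simpl. nra. }
  replace (Cplus (RtoC 1) (Cmult (0, s * t) (0, s * t))) with ((1 - (s*t)^2, 0) : Complex.C)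
    by (unfold Cplus, Cmult, RtoC; simpl; f_equal; ring).
  unfold Cinv, Cmult, iR; simpl. f_equal.
  - field. simpl in Hd. lra.
  - field. simpl in Hd. lra.
Qed.

Lemma ftilde_imag m t : -1 < t < 1 -> ftilde m (iR t) = (0, - RInt (g m t) 0 1).
Proof.
  intros Ht.
  assert (HI : @is_RInt C_R_NormedModule (phi m (iR t)) 0 1
                 ((0, (-1) ^ (bigM m + 1) * RInt (g m t) 0 1) : Complex.C)).
  { apply (@is_RInt_ext C_R_NormedModule (fun s => ((0, (-1) ^ (bigM m + 1) * g m t s) : Complex.C))).
    { rewrite Rmin_left, Rmax_right by lra. intros s Hs. symmetry. apply phi_imag; lra. }
    apply (@is_RInt_fct_extend_pair R_NormedModule R_NormedModule).
    - assert (H := @is_RInt_const R_NormedModule 0 1 0).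
      unfold scal in H; simpl in H; unfold mult in H; simpl in H. rewrite Rmult_0_r in H. exact H.
    - simpl. apply (@is_RInt_scal R_NormedModule). apply (@RInt_correct R_CompleteNormedModule).
      apply g_ex; lra. }
  unfold ftilde. fold (phi m (iR t)).
  rewrite (@is_RInt_unique C_R_CompleteNormedModule _ _ _ _ HI).
  unfold Cmult, RtoC; simpl. f_equal. ring.
  rewrite pow_add. 
  replace ((-1) ^ bigM m * ((-1) ^ bigM m * (-1) ^ 1 * RInt (g m t) 0 1))
    with (((-1) ^ bigM m * (-1) ^ bigM m) * (-1) * RInt (g m t) 0 1) by ring.
  rewrite <- pow_add. replace (bigM m + bigM m)%nat with (2 * bigM m)%nat by lia.
  rewrite pow_mult. replace ((-1)^2) with 1 by ring. rewrite pow1. ring.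
Qed.

Definition q (m : nat) (y : R) : R := / INR m * G m (1 - y / INR m).

Lemma I_subst m t : 0 < INR m -> 0 < t < 1 ->
  is_RInt (q m) (INR m * (1 - t)) (INR m) (RInt (g m t) 0 1).
Proof.
  intros Hm Ht.
  set (u := - / (INR m * t)). set (v := / t).
  assert (H1 : is_RInt (g m t) 1 0 (opp (RInt (g m t) 0 1))).
  { apply (@is_RInt_swap R_NormedModule). apply (@RInt_correct R_CompleteNormedModule).
    apply g_ex; lra. }
  assert (H2 : is_RInt (g m t) (u * (INR m * (1 - t)) + v) (u * INR m + v) (opp (RInt (g m t) 0 1))).
  { replace (u * (INR m * (1 - t)) + v) with 1 by (unfold u, v; field; lra).
    replace (u * INR m + v) with 0 by (unfold u, v; field; lra). exact H1. }
  apply (@is_RInt_comp_lin R_NormedModule) in H2.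
  apply (@is_RInt_opp R_NormedModule) in H2.
  rewrite opp_opp in H2.
  revert H2. apply (@is_RInt_ext R_NormedModule).
  intros y _. unfold g, q. 
  replace ((u * y + v) * t) with (1 - y / INR m) by (unfold u, v; field; lra).
  change (- (u * (t * G m (1 - y / INR m))) = / INR m * G m (1 - y / INR m)).
  unfold u. field. lra.
Qed.

Definition p (x : R) : R := exp (- x) / x.

Lemma p_ex a b : 0 < a -> 0 < b -> ex_RInt p a b.
Proof.
  intros Ha Hb. apply (@ex_RInt_continuous R_CompleteNormedModule).
  intros z Hz. assert (0 < z).
  { eapply Rlt_le_trans; [|apply Hz]. apply Rmin_glb_lt; lra. }
  apply (ex_derive_continuous p). unfold p. auto_derive. lra.
Qed.

Lemma exp_int a b : is_RInt (fun x => exp (- x)) a b (exp (- a) - exp (- b)).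
Proof.
  assert (H : is_RInt (fun x => exp (- x)) a b (minus (- exp (- b)) (- exp (- a)))).
  { apply (@is_RInt_derive R_CompleteNormedModule (fun x => - exp (- x))).
    - intros x _. auto_derive; auto. ring.
    - intros x _. apply (ex_derive_continuous (fun x => exp (- x))). auto_derive. auto. }
  replace (exp (- a) - exp (- b)) with (minus (- exp (- b)) (- exp (- a))). exact H.
  unfold minus, plus, opp; simpl; ring.
Qed.

Lemma p_tail b c : 1 <= b <= c -> 0 <= RInt p b c <= exp (- b) - exp (- c).
Proof.
  intros H. split.
  - apply RInt_ge_0. lra. apply p_ex; lra. intros x Hx. unfold p.
    apply Rmult_le_pos. left; apply exp_pos. left; apply Rinv_0_lt_compat; lra.
  - rewrite <- (is_RInt_unique _ _ _ _ (exp_int b c)).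
    apply RInt_le. lra. apply p_ex; lra. eexists; apply exp_int.
    intros x Hx. unfold p. unfold Rdiv.
    assert (0 < exp (-x)) by apply exp_pos.
    assert (/ x <= 1). { replace 1 with (/ 1) by field. apply Rinv_le_contravar; lra. }
    assert (0 < / x) by (apply Rinv_0_lt_compat; lra). nra.
Qed.

Lemma F_mono x y z : 1 <= x <= y -> y <= z ->
  RInt p x y <= RInt p x z <= RInt p x y + exp (- y).
Proof.
  intros Hxy Hyz.
  rewrite <- (RInt_Chasles p x y z) by (apply p_ex; lra).
  pose proof (p_tail y z ltac:(lra)). pose proof (exp_pos (- z)).
  change (plus (RInt p x y) (RInt p y z)) with (RInt p x y + RInt p y z). lra.
Qed.

Lemma expint_bounds x b : 1 <= x <= b ->
  RInt p x b <= expint x <= RInt p x b + exp (- b).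
Proof.
  intros Hxb.
  set (S := fun r => exists y, x <= y /\ r = RInt p x y).
  assert (HS : bound S).
  { exists (exp (- x)). intros r [y [Hy ->]].
    pose proof (F_mono x x y ltac:(lra) Hy). rewrite RInt_point in H.
    change (zero : R) with 0 in H. lra. }
  assert (HS0 : exists r, S r) by (exists (RInt p x x); exists x; split; [lra|reflexivity]).
  destruct (completeness S HS HS0) as [L [HL1 HL2]].
  assert (Hgen : is_RInt_gen p (at_point x) (Rbar_locally p_infty) L).
  { intros P [eps HP].
    assert (Hy0 : exists y0, x <= y0 /\ L - eps < RInt p x y0).
    { apply NNPP. intro Hn. 
      assert (L <= L - eps). { apply HL2. intros r [y [Hy ->]].
        apply Rnot_lt_le. intro Hlt. apply Hn. exists y. split; assumption. }
      pose proof (cond_pos eps). lra. }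
    destruct Hy0 as [y0 [Hy0 Hy0L]].
    apply Filter_prod with (fun a => a = x) (fun b => y0 < b).
    - reflexivity.
    - exists y0. intros; assumption.
    - intros a c -> Hc. simpl. exists (RInt p x c). split.
      + apply (@RInt_correct R_CompleteNormedModule). apply p_ex; lra.
      + apply HP. 
        assert (RInt p x c <= L) by (apply HL1; exists c; split; [lra|reflexivity]).
        pose proof (F_mono x y0 c ltac:(lra) ltac:(lra)).
        change (Rabs (RInt p x c - L) < eps). apply Rabs_def1; lra. }
  assert (EL : expint x = L).
  { unfold expint. apply (@is_RInt_gen_unique R_CompleteNormedModule). apply Proper_StrongProper, at_point_filter. apply Proper_StrongProper, Rbar_locally_filter. exact Hgen. }
  rewrite EL. split.
  - apply HL1. exists b. split; [lra|reflexivity].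
  - apply HL2. intros r [y [Hy ->]].
    destruct (Rle_or_lt y b) as [Hyb|Hyb].
    + pose proof (F_mono x y b ltac:(lra) Hyb). pose proof (exp_pos (- b)). lra.
    + pose proof (F_mono x b y ltac:(lra) ltac:(lra)). lra.
Qed.
Lemma bern (x : R) (k : nat) : 0 <= x <= 1 -> 1 - INR k * x <= (1 - x) ^ k.
Proof.
  intros Hx. induction k. simpl. lra.
  rewrite S_INR. simpl pow. assert (0 <= 1 - x) by lra. pose proof (pos_INR k).
  assert (0 <= (1 - x) * ((1 - x) ^ k - (1 - INR k * x))) by (apply Rmult_le_pos; lra).
  assert (0 <= INR k * (x * x)) by (apply Rmult_le_pos; nra). nra.
Qed.

Lemma up_bound (M : nat) u : 0 <= u <= 1 -> (1 - u) ^ M <= exp (- (INR M * u)).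
Proof.
  intros Hu. apply Rle_trans with (exp (- u) ^ M).
  apply pow_incr. pose proof (exp_ineq1_le (- u)). lra.
  rewrite exp_pow_n. right. f_equal. ring.
Qed.

Lemma low_bound (M : nat) u : 0 <= u <= 1 ->
  exp (- (INR M * u)) * (1 - INR M * u ^ 2) <= (1 - u) ^ M.
Proof.
  intros Hu.
  assert (A : exp (- u) * (1 - u ^ 2) <= 1 - u).
  { pose proof (exp_ineq1_le u). assert (0 <= 1 - u) by lra.
    assert ((1 - u) * (1 + u) <= (1 - u) * exp u) by nra.
    replace (exp (- u) * (1 - u ^ 2)) with (exp (- u) * ((1 - u) * (1 + u))) by ring.
    apply Rle_trans with (exp (- u) * ((1 - u) * exp u)).
    apply Rmult_le_compat_l. left; apply exp_pos. assumption.
    replace (exp (- u) * ((1 - u) * exp u)) with ((1 - u) * (exp (- u) * exp u)) by ring.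
    rewrite <- exp_plus. replace (- u + u) with 0 by ring. rewrite exp_0. lra. }
  assert (B : 0 <= exp (- u) * (1 - u ^ 2)).
  { apply Rmult_le_pos. left; apply exp_pos. simpl. nra. }
  apply Rle_trans with ((exp (- u) * (1 - u ^ 2)) ^ M).
  2:{ apply pow_incr. lra. }
  rewrite Rpow_mult_distr, exp_pow_n.
  replace (INR M * - u) with (- (INR M * u)) by ring.
  apply Rmult_le_compat_l. left; apply exp_pos.
  apply bern. simpl. nra.
Qed.

Lemma D_bound (m n : nat) u : (1 <= m)%nat -> (m <= n <= m + 1)%nat -> 0 < u <= 1 ->
  Rabs ((1 - u) ^ n / (u * (2 - u)) - exp (- (INR m * u)) / (2 * u))
    <= (2 + INR m * u) * exp (- (INR m * u)).
Proof.
  intros Hm Hn Hu.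
  set (M := INR m). set (Y := exp (- (M * u))). set (X := (1 - u) ^ n).
  assert (HY : 0 < Y) by apply exp_pos.
  assert (HM : 1 <= M) by (unfold M; replace 1 with (INR 1) by reflexivity; apply le_INR; lia).
  assert (HX0 : 0 <= X) by (apply pow_le; lra).
  assert (HXY : X <= Y).
  { apply Rle_trans with ((1 - u) ^ m). apply pow_le_dec; [lra|lia]. apply up_bound; lra. }
  assert (HXl : (1 - u) * (Y * (1 - M * u ^ 2)) <= X).
  { apply Rle_trans with ((1 - u) ^ (S m)).
    simpl. apply Rmult_le_compat_l. lra. apply low_bound; lra.
    apply pow_le_dec; [lra|lia]. }
  assert (E : X / (u * (2 - u)) - Y / (2 * u) = X * / (2 * (2 - u)) + (X - Y) * / (2 * u)).
  { field. lra. }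
  rewrite E.
  set (A := X * / (2 * (2 - u))). set (Bq := (X - Y) * / (2 * u)).
  assert (HA : 0 <= A <= Y / 2).
  { unfold A. split. apply Rmult_le_pos. lra. left; apply Rinv_0_lt_compat; lra.
    apply Rle_trans with (X * / 2). apply Rmult_le_compat_l. lra.
    apply Rinv_le_contravar; lra. lra. }
  assert (HB : - (Y * (1 + M * u)) / 2 <= Bq <= 0).
  { assert (EB : Bq * (2 * u) = X - Y) by (unfold Bq; field; lra).
    split.
    - apply Rmult_le_reg_r with (2 * u). lra.
      rewrite EB. replace (- (Y * (1 + M * u)) / 2 * (2 * u)) with (- Y * (u + M * u ^ 2)) by (field).
      assert (0 <= M * u ^ 3) by (apply Rmult_le_pos; [lra| apply pow_le; lra]).
      replace ((1 - u) * (Y * (1 - M * u ^ 2))) with (Y * (1 - u - M * u ^ 2 + M * u ^ 3)) in HXl by ring.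
      nra.
    - apply Rmult_le_reg_r with (2 * u). lra. rewrite EB. lra. }
  assert (0 <= M * u) by nra.
  apply Rabs_le. split; nra.
Qed.

Lemma main_est m t : (1 <= m)%nat -> 0 < t < 1 -> 1 <= INR m * (1 - t) ->
  Rabs (RInt (g m t) 0 1 - expint (INR m * (1 - t)) / 2) <= 5 / INR m
  /\ 0 <= expint (INR m * (1 - t)) <= 1.
Proof.
  intros Hm Ht Hx.
  set (M := INR m) in *. set (x := M * (1 - t)) in *.
  assert (HM : 1 <= M) by (unfold M; replace 1 with (INR 1) by reflexivity; apply le_INR; lia).
  assert (HxM : x <= M) by (unfold x; nra).
  pose proof (nn_bounds m Hm) as Hn.
  assert (HI : is_RInt (q m) x M (RInt (g m t) 0 1)) by (apply I_subst; unfold M in *; lra).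
  assert (HF : is_RInt p x M (RInt p x M)) by (apply (@RInt_correct R_CompleteNormedModule); apply p_ex; lra).
  pose proof (expint_bounds x M ltac:(lra)) as HE.
  pose proof (p_tail x M ltac:(lra)) as HT.
  set (I := RInt (g m t) 0 1) in *. set (F := RInt p x M) in *. set (E := expint x) in *.
  assert (Hh : is_RInt (fun y => q m y - p y / 2) x M (I - F / 2)).
  { assert (H1 := @is_RInt_minus R_NormedModule _ _ _ _ _ _ HI (@is_RInt_scal R_NormedModule _ _ _ (/2) _ HF)).
    replace (I - F / 2) with (minus I (scal (/ 2) F)).
    2:{ change (I - / 2 * F = I - F / 2). field. }
    revert H1. apply (@is_RInt_ext R_NormedModule). intros y _.
    change (q m y - / 2 * p y = q m y - p y / 2). field. }
  assert (Hb : is_RInt (fun y => (2 + y) * exp (- y) / M) x M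
                 (((3 + x) * exp (- x) - (3 + M) * exp (- M)) / M)).
  { assert (H1 : is_RInt (fun y => (2 + y) * exp (- y) / M) x M
                   (minus (- (3 + M) * exp (- M) / M) (- (3 + x) * exp (- x) / M))).
    { apply (@is_RInt_derive R_CompleteNormedModule (fun y => - (3 + y) * exp (- y) / M)).
      - intros z _. auto_derive; try exact Logic.I; try (field; lra).
      - intros z _. apply (ex_derive_continuous (fun y => (2 + y) * exp (- y) / M)).
        auto_derive; exact Logic.I. }
    revert H1. replace (minus (- (3 + M) * exp (- M) / M) (- (3 + x) * exp (- x) / M))
      with (((3 + x) * exp (- x) - (3 + M) * exp (- M)) / M). auto.
    unfold minus, plus, opp; simpl. field. lra. }
  assert (Hpt : forall y, x <= y <= M -> norm (q m y - p y / 2) <= (2 + y) * exp (- y) / M).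
  { intros y Hy. change (norm (q m y - p y / 2)) with (Rabs (q m y - p y / 2)).
    set (u := y / M).
    assert (Hu : 0 < u <= 1).
    { unfold u. split. apply Rdiv_lt_0_compat; lra.
      apply Rmult_le_reg_r with M. lra. unfold Rdiv. rewrite Rmult_assoc, Rinv_l by lra. lra. }
    assert (Ey : y = M * u) by (unfold u; field; lra).
    replace (q m y - p y / 2) with
      (/ M * ((1 - u) ^ nn m / (u * (2 - u)) - exp (- (M * u)) / (2 * u))).
    2:{ unfold q, G, p. fold M. fold u. rewrite Ey.
        replace (1 - (1 - u) ^ 2) with (u * (2 - u)) by ring. field. lra. }
    rewrite Rabs_mult, Rabs_pos_eq by (left; apply Rinv_0_lt_compat; lra).
    eapply Rle_trans. apply Rmult_le_compat_l. left; apply Rinv_0_lt_compat; lra.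
    apply D_bound; assumption.
    rewrite Ey. right. fold M. field. lra. }
  assert (Hn1 : norm (I - F / 2) <= ((3 + x) * exp (- x) - (3 + M) * exp (- M)) / M).
  { apply (@norm_RInt_le R_NormedModule (fun y => q m y - p y / 2) (fun y => (2 + y) * exp (- y) / M) x M).
    lra. exact Hpt. exact Hh. exact Hb. }
  change (norm (I - F / 2)) with (Rabs (I - F / 2)) in Hn1.
  assert (Hc : (3 + x) * exp (- x) <= 4).
  { pose proof (exp_ineq1_le x). pose proof (exp_pos x).
    rewrite exp_Ropp. assert (0 < / exp x <= 1).
    { split. apply Rinv_0_lt_compat; lra. replace 1 with (/1) by field. apply Rinv_le_contravar; lra. }
    assert (x * / exp x <= 1).
    { apply Rmult_le_reg_r with (exp x). lra. rewrite Rmult_assoc, Rinv_l by lra. lra. }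
    nra. }
  assert (Hc2 : 0 <= (3 + M) * exp (- M)) by (apply Rmult_le_pos; [lra|left; apply exp_pos]).
  assert (HeM : exp (- M) <= / M).
  { rewrite exp_Ropp. apply Rinv_le_contravar. lra. pose proof (exp_ineq1_le M). lra. }
  assert (Hex : exp (- x) <= 1).
  { rewrite exp_Ropp. pose proof (exp_ineq1_le x). replace 1 with (/1) by field. apply Rinv_le_contravar; lra. }
  split.
  - replace (I - E / 2) with ((I - F / 2) + (F - E) / 2) by field.
    eapply Rle_trans. apply Rabs_triang.
    assert (Rabs ((F - E) / 2) <= exp (- M) / 2).
    { unfold Rdiv. rewrite Rabs_mult, (Rabs_pos_eq (/2)) by lra. apply Rmult_le_compat_r. lra.
      rewrite Rabs_minus_sym. rewrite Rabs_pos_eq; lra. }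
    assert (((3 + x) * exp (- x) - (3 + M) * exp (- M)) / M <= 4 / M).
    { unfold Rdiv. apply Rmult_le_compat_r. left; apply Rinv_0_lt_compat; lra. lra. }
    replace (5 / M) with (4 / M + / M / 2 * 2) by (field; lra). 
    assert (/ M / 2 * 2 = / M) by (field; lra). 
    assert (0 < / M) by (apply Rinv_0_lt_compat; lra). lra.
  - pose proof (exp_pos (- M)). lra.
Qed.

Lemma g_neg m t s : g m (- t) s = - g m t s.
Proof.
  unfold g, G, nn. replace (s * - t) with (- (s * t)) by ring.
  replace (2 * bigM m + 2)%nat with (2 * (bigM m + 1))%nat by lia.
  rewrite !pow_mult. replace ((- (s * t)) ^ 2) with ((s * t) ^ 2) by ring. ring.
Qed.

Lemma part3 : exists K : R, exists N : nat, forall m : nat, (N <= m)%nat ->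
     forall t : R, 1 - / sqrt (INR m) <= t <= 1 - / INR m ->
       Cmod (Cminus (ftilde m (iR t))
                    (Cmult (Cinv (Cmult (RtoC 2) Ci)) (RtoC (expint (INR m * (1 - t))))))
         <= K * (ln (INR m) / INR m)
       /\ Cmod (ftilde m (iR t)) <= K
       /\ Cmod (ftilde m (iR (- t))) <= K.
Proof.
  exists 6, 4%nat. intros m Hm t Ht.
  assert (Hm4 : 4 <= INR m) by (replace 4 with (INR 4) by (simpl; ring); apply le_INR; lia).
  set (M := INR m) in *.
  assert (Hsq : 2 <= sqrt M).
  { replace 2 with (sqrt 4). apply sqrt_le_1_alt; lra.
    replace 4 with (Rsqr 2) by (unfold Rsqr; ring). apply sqrt_Rsqr; lra. }
  assert (Hd : / sqrt M <= / 2) by (apply Rinv_le_contravar; lra).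
  assert (HM1 : 0 < / M) by (apply Rinv_0_lt_compat; lra).
  assert (Htt : 0 < t < 1) by lra.
  assert (Hx : 1 <= M * (1 - t)).
  { replace 1 with (M * / M) at 1 by (field; lra). apply Rmult_le_compat_l; lra. }
  destruct (main_est m t ltac:(lia) Htt Hx) as [A B].
  fold M in A, B.
  set (E := expint (M * (1 - t))) in *.
  set (II := RInt (g m t) 0 1) in *.
  assert (Hf : ftilde m (iR t) = iR (- II)) by (apply ftilde_imag; lra).
  assert (Hf2 : ftilde m (iR (- t)) = iR II).
  { rewrite ftilde_imag by lra. unfold iR. f_equal.
    rewrite (RInt_ext (g m (- t)) (fun s => opp (g m t s))).
    rewrite (@RInt_opp R_CompleteNormedModule). unfold II. change (- - RInt (g m t) 0 1 = RInt (g m t) 0 1). ring.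
    apply g_ex; lra. intros s _. rewrite g_neg. reflexivity. }
  assert (Hln : 1 <= ln M).
  { rewrite <- (ln_exp 1). apply ln_le. apply exp_pos. pose proof exp_le_3. lra. }
  assert (A' : 5 / M <= 6 * (ln M / M)).
  { unfold Rdiv. nra. }
  assert (Hb : Rabs II <= 6).
  { replace II with ((II - E / 2) + E / 2) by ring. eapply Rle_trans. apply Rabs_triang.
    rewrite (Rabs_pos_eq (E / 2)) by lra.
    assert (5 / M <= 5 / 4). { unfold Rdiv. apply Rmult_le_compat_l. lra. apply Rinv_le_contravar; lra. }
    lra. }
  split; [|split].
  - rewrite Hf.
    replace (Cminus (iR (- II)) (Cmult (Cinv (Cmult (RtoC 2) Ci)) (RtoC E))) with (iR (- (II - E / 2))).
    2:{ unfold Cminus, Cplus, Copp, Cmult, Cinv, Ci, RtoC, iR; simpl. f_equal; field. }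
    rewrite Cmod_iR, Rabs_Ropp. lra.
  - rewrite Hf, Cmod_iR, Rabs_Ropp. exact Hb.
  - rewrite Hf2, Cmod_iR. exact Hb.
Qed.

Theorem lemma2 :
  (* (i) *)
  (exists K : R, exists N : nat, forall m : nat, (N <= m)%nat ->
     forall z : Complex.C, Cmod z <= / 2 ->
       Cmod (ftilde m z) <= K * (/ 2) ^ m)
  /\
  (* (ii) *)
  (exists K : R, exists N : nat, forall m : nat, (N <= m)%nat ->
     forall t : R, -1 + / sqrt (INR m) <= t <= 1 - / sqrt (INR m) ->
       Cmod (ftilde m (iR t)) <= K * (exp (- (/ 2) * sqrt (INR m)) / sqrt (INR m)))
  /\
  (* (iii) *)
  (exists K : R, exists N : nat, forall m : nat, (N <= m)%nat ->
     forall t : R, 1 - / sqrt (INR m) <= t <= 1 - / INR m ->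
       Cmod (Cminus (ftilde m (iR t))
                    (Cmult (Cinv (Cmult (RtoC 2) Ci)) (RtoC (expint (INR m * (1 - t))))))
         <= K * (ln (INR m) / INR m)
       /\ Cmod (ftilde m (iR t)) <= K
       /\ Cmod (ftilde m (iR (- t))) <= K).
Proof.
  split; [exact part1 | split; [exact part2 | exact part3]].
Qed.
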